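(* Let $G\le\mathrm{O}(d)$ be finite and $z_1,\ldots,z_n\in\mathbb{R}^d$. Put $$\alpha(\{z_i\}_{i=1}^n,G):=\inf_{x,y\in\mathcal{O}}\ \max_{f\in\mathcal{F}(x,y)}\Big(\sum_{w\in S(x,y)}\lambda_{\min}\Big(\sum_{i\in f^{-1}(w)}v_i(x)v_i(x)^\top\Big)\Big)^{1/2}.$$ Then the max filter bank $\Phi:\mathbb{R}^d/G\to\mathbb{R}^n$, $\Phi([x])=(\langle\!\langle[z_i],[x]\rangle\!\rangle)_{i=1}^n$, satisfies $$\inf_{\substack{[x],[y]\in\mathbb{R}^d/G\\ [x]\ne[y]}}\frac{\|\Phi([x])-\Phi([y])\|}{d([x],[y])}\ge\alpha(\{z_i\}_{i=1}^n,G).$$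
   Context: For $x\in\mathbb{R}^d$, $[x]:=\{gx:g\in G\}$; $d([x],[y]):=\min_{p\in[x],q\in[y]}\|p-q\|$ and $\langle\!\langle[x],[y]\rangle\!\rangle:=\max_{p\in[x],q\in[y]}\langle p,q\rangle$. The open Voronoi cell $V_x$ is the set of $y$ such that $x$ is the unique maximizer of $\langle p,y\rangle$ over $p\in[x]$; $Q_x:=\bigcup_{p\in[x]}V_p$. $P(G):=\{x:\mathrm{stab}_G(x)=\{\mathrm{id}\}\}$, and $\mathcal{O}:=P(G)\cap\bigcap_{i=1}^nQ_{z_i}$. For $x\in\mathcal{O}$, $v_i(x)$ is the unique element of $\arg\max_{p\in[z_i]}\langle p,x\rangle$. $S(x,y):=\{q\in[y]:V_q\cap V_x\ne\varnothing\}$, and $\mathcal{F}(x,y)$ is the (nonempty) set of functions $f:\{1,\ldots,n\}\to[y]$ with $f(i)\in S(x,y)\cap\arg\max_{q\in[y]}\langle q,v_i(x)\rangle$ for all $i$. An empty sum of matrices is the zero matrix; $\lambda_{\min}$ denotes the smallest eigenvalue. *)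

(* Defs.v *)
From HB Require Import structures.
From mathcomp Require Import all_boot all_order all_algebra.
From mathcomp Require Import boolp classical_sets functions fsbigop reals.
Set Implicit Arguments. Unset Strict Implicit. Unset Printing Implicit Defensive.
Import Order.TTheory GRing.Theory Num.Theory.
Local Open Scope classical_set_scope.
Local Open Scope ring_scope.

Section MaxFilter.
Variables (R : realType) (d : nat).
Implicit Types (G : seq 'M[R]_d) (x y p q : 'cV[R]_d).

Definition mf_dot (m : nat) (x y : 'cV[R]_m) : R := \sum_(i < m) x i 0 * y i 0.
Definition enorm (m : nat) (x : 'cV[R]_m) : R := Num.sqrt (mf_dot x x).

Definition finite_orth_group G : Prop :=
  [/\ 1%:M \in G,
      (forall g h, g \in G -> h \in G -> g *m h \in G),
      (forall g, g \in G -> g^T \in G) &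
      (forall g, g \in G -> g^T *m g = 1%:M)].

Definition gorbit G x : set 'cV[R]_d := [set p | exists2 g, g \in G & p = g *m x].

Definition odist G x y : R :=
  inf [set r | exists p, exists q, [/\ gorbit G x p, gorbit G y q & r = enorm (p - q)]].

Definition opair G x y : R :=
  sup [set r | exists p, exists q, [/\ gorbit G x p, gorbit G y q & r = mf_dot p q]].

Definition voronoi G x : set 'cV[R]_d :=
  [set y | forall p, gorbit G x p -> p != x -> mf_dot p y < mf_dot x y].

Definition Qcell G x : set 'cV[R]_d :=
  [set y | exists2 p, gorbit G x p & voronoi G p y].

Definition Pfree G : set 'cV[R]_d :=
  [set x | forall g, g \in G -> g *m x = x -> g = 1%:M].

Definition Oset G (n : nat) (z : 'I_n -> 'cV[R]_d) : set 'cV[R]_d :=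
  [set x | Pfree G x /\ forall i, Qcell G (z i) x].

Definition argmax_orbit G z x : set 'cV[R]_d :=
  [set p | gorbit G z p /\ forall q, gorbit G z q -> mf_dot q x <= mf_dot p x].

(* v_i(x): the (for x in O, unique) element of arg max_{p in [z_i]} <p,x> *)
Definition vsel G z x : 'cV[R]_d := xget 0 (argmax_orbit G z x).

Definition Sset G x y : set 'cV[R]_d :=
  [set q | gorbit G y q /\ voronoi G q `&` voronoi G x !=set0].

Definition Fset G (n : nat) (z : 'I_n -> 'cV[R]_d) x y : set ('I_n -> 'cV[R]_d) :=
  [set f | forall i, Sset G x y (f i) /\ argmax_orbit G y (vsel G (z i) x) (f i)].

Definition lambda_min (m : nat) (A : 'M[R]_m) : R := inf [set a | eigenvalue A a].

Definition fvalue G (n : nat) (z : 'I_n -> 'cV[R]_d) x y (f : 'I_n -> 'cV[R]_d) : R :=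
  Num.sqrt (\sum_(w \in Sset G x y)
     lambda_min (\sum_(i < n | f i == w) vsel G (z i) x *m (vsel G (z i) x)^T)).

Definition mf_alpha G (n : nat) (z : 'I_n -> 'cV[R]_d) : R :=
  inf [set r | exists x, exists y, [/\ Oset G z x, Oset G z y &
        r = sup [set s | exists2 f, Fset G z x y f & s = fvalue G z x y f]]].

Definition maxfilter G (n : nat) (z : 'I_n -> 'cV[R]_d) x : 'cV[R]_n :=
  \col_(i < n) opair G (z i) x.

End MaxFilter.

(* Main.v *)
Require Import Defs.
From HB Require Import structures.
From mathcomp Require Import all_boot all_order all_algebra.
From mathcomp Require Import boolp classical_sets functions fsbigop reals.
From mathcomp Require Import finmap cardinality.
From mathcomp Require Import ring lra.
Import Order.TTheory GRing.Theory Num.Theory.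
Local Open Scope classical_set_scope.
Local Open Scope ring_scope.
Set Implicit Arguments. Unset Strict Implicit. Unset Printing Implicit Defensive.


Section Dot.
Variable R : realType.

Lemma dotE m (x y : 'cV[R]_m) : mf_dot x y = (x^T *m y) 0 0.
Proof. rewrite /mf_dot mxE; apply: eq_bigr => i _; by rewrite mxE. Qed.

Lemma dotC m (x y : 'cV[R]_m) : mf_dot x y = mf_dot y x.
Proof. rewrite /mf_dot; apply: eq_bigr => i _; by rewrite mulrC. Qed.

Lemma dotDl m (x y w : 'cV[R]_m) : mf_dot (x + y) w = mf_dot x w + mf_dot y w.
Proof. rewrite /mf_dot -big_split; apply: eq_bigr => i _; by rewrite !mxE mulrDl. Qed.

Lemma dotNl m (x w : 'cV[R]_m) : mf_dot (- x) w = - mf_dot x w.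
Proof. rewrite /mf_dot -sumrN; apply: eq_bigr => i _; by rewrite !mxE mulNr. Qed.

Lemma dotBl m (x y w : 'cV[R]_m) : mf_dot (x - y) w = mf_dot x w - mf_dot y w.
Proof. by rewrite dotDl dotNl. Qed.

Lemma dotZl m a (x w : 'cV[R]_m) : mf_dot (a *: x) w = a * mf_dot x w.
Proof. rewrite /mf_dot mulr_sumr; apply: eq_bigr => i _; by rewrite !mxE mulrA. Qed.

Lemma dotDr m (x y w : 'cV[R]_m) : mf_dot w (x + y) = mf_dot w x + mf_dot w y.
Proof. by rewrite dotC dotDl !(dotC w). Qed.

Lemma dotBr m (x y w : 'cV[R]_m) : mf_dot w (x - y) = mf_dot w x - mf_dot w y.
Proof. by rewrite dotC dotBl !(dotC w). Qed.

Lemma dotZr m a (x w : 'cV[R]_m) : mf_dot w (a *: x) = a * mf_dot w x.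
Proof. by rewrite dotC dotZl dotC. Qed.

Lemma dot_mulmx m (A : 'M[R]_m) (x y : 'cV[R]_m) :
  mf_dot (A *m x) y = mf_dot x (A^T *m y).
Proof. by rewrite !dotE trmx_mul mulmxA. Qed.

Lemma dotxx_ge0 m (x : 'cV[R]_m) : 0 <= mf_dot x x.
Proof. apply: sumr_ge0 => i _; by rewrite -expr2 sqr_ge0. Qed.

Lemma dotxx_eq0 m (x : 'cV[R]_m) : mf_dot x x = 0 -> x = 0.
Proof.
move=> /psumr_eq0P H; apply/matrixP => i j; rewrite (ord1 j) mxE.
have h0 : forall k : 'I_m, true -> 0 <= x k 0 * x k 0 by move=> k _; rewrite -expr2 sqr_ge0.
have := H h0 i isT.
by rewrite -expr2 => /eqP; rewrite sqrf_eq0 => /eqP.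
Qed.

Lemma enorm_ge0 m (x : 'cV[R]_m) : 0 <= enorm x.
Proof. exact: sqrtr_ge0. Qed.

Lemma enorm_sqr m (x : 'cV[R]_m) : enorm x ^+ 2 = mf_dot x x.
Proof. by rewrite sqr_sqrtr // dotxx_ge0. Qed.

Lemma CS m (x y : 'cV[R]_m) : mf_dot x y <= enorm x * enorm y.
Proof.
set a := mf_dot x x; set b := mf_dot x y; set c := mf_dot y y.
have H t : 0 <= a + 2 * t * b + t ^+ 2 * c.
  have := dotxx_ge0 (x + t *: y).
  rewrite !dotDl !dotDr !dotZl !dotZr (dotC y x) -/a -/b -/c.
  by move=> h; lra.
have [bn|bp] := lerP b 0.
  by apply: le_trans bn _; rewrite mulr_ge0 // enorm_ge0.
suff hb : b ^+ 2 <= a * c.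
  rewrite /enorm -sqrtrM ?dotxx_ge0 // -/a -/c.
  by rewrite -(ger0_norm (ltW bp)) -sqrtr_sqr ler_sqrt // mulr_ge0 // dotxx_ge0.
have c0 : 0 <= c by apply: dotxx_ge0.
have a0 : 0 <= a by apply: dotxx_ge0.
have [c00|cp] := eqVneq c 0.
  have := H (- (a + 1) / (2 * b)).
  have e : 2 * (- (a + 1) / (2 * b)) * b = - (a + 1) by field; rewrite gt_eqF.
  rewrite c00 mulr0 addr0 e. lra.
have cpos : 0 < c by rewrite lt_def cp c0.
have := H (- b / c).
move=> h.
have : 0 <= c * (a + 2 * (- b / c) * b + (- b / c) ^+ 2 * c) by rewrite mulr_ge0.
have -> : c * (a + 2 * (- b / c) * b + (- b / c) ^+ 2 * c) = a * c - b ^+ 2.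
  by field; rewrite gt_eqF.
lra.
Qed.

Lemma enormD m (x y : 'cV[R]_m) : enorm (x + y) <= enorm x + enorm y.
Proof.
rewrite {1}/enorm -(ger0_norm (addr_ge0 (enorm_ge0 x) (enorm_ge0 y))) -sqrtr_sqr.
rewrite ler_sqrt ?sqr_ge0 // dotDl !dotDr (dotC y x) -!enorm_sqr.
have := CS x y; nra.
Qed.

Lemma enormN m (x : 'cV[R]_m) : enorm (- x) = enorm x.
Proof. by rewrite /enorm dotNl dotC dotNl opprK. Qed.

Lemma enormB m (x y : 'cV[R]_m) : enorm (x - y) = enorm (y - x).
Proof. by rewrite -enormN opprB. Qed.

Lemma enorm_eq0 m (x : 'cV[R]_m) : enorm x = 0 -> x = 0.
Proof. move=> h; apply: dotxx_eq0; by rewrite -enorm_sqr h expr0n. Qed.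

Lemma sumsq_le (I : Type) (s : seq I) (F : I -> R) : (forall i, 0 <= F i) ->
  \sum_(i <- s) F i ^+ 2 <= (\sum_(i <- s) F i) ^+ 2.
Proof.
move=> F0; elim: s => [|a s IH]; first by rewrite !big_nil expr0n.
rewrite !big_cons.
have : 0 <= \sum_(i <- s) F i by apply: sumr_ge0.
have := F0 a. nra.
Qed.

Lemma enorm_le_sum m (x : 'cV[R]_m) : enorm x <= \sum_i `|x i 0|.
Proof.
rewrite {1}/enorm -(ger0_norm (sumr_ge0 _ (fun i _ => normr_ge0 (x i 0)))) -sqrtr_sqr.
rewrite ler_sqrt ?sqr_ge0 // /mf_dot.
apply: le_trans (sumsq_le _ (fun i => normr_ge0 (x i 0))).
rewrite le_eqVlt; apply/orP; left; apply/eqP/eq_bigr => i _; by rewrite real_normK ?num_real // expr2.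
Qed.

End Dot.


Section SupInf.
Variable R : realType.
Lemma sup_max (S : set R) m : S m -> (forall r, S r -> r <= m) -> sup S = m.
Proof.
move=> Sm ub; apply/le_anti/andP; split.
  by apply: ge_sup; [exists m | move=> r /ub].
by apply: ub_le_sup => //; exists m => r /ub.
Qed.
Lemma inf_min (S : set R) m : S m -> (forall r, S r -> m <= r) -> inf S = m.
Proof.
move=> Sm lb; apply/le_anti/andP; split.
  by apply: ge_inf => //; exists m => r /lb.
by apply: lb_le_inf; [exists m | move=> r /lb].
Qed.

Lemma seq_argmax (T : eqType) (s : seq T) (F : T -> R) : s != [::] ->
  exists2 t, t \in s & forall u, u \in s -> F u <= F t.
Proof.
elim: s => [//|a s IH] _.
have [->|sn] := eqVneq s [::].
  by exists a; rewrite ?mem_head // => u; rewrite inE => /eqP ->.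
have [t ts tm] := IH sn.
have [le|lt] := lerP (F a) (F t).
  exists t; first by rewrite inE ts orbT.
  by move=> u; rewrite inE => /orP [/eqP ->|/tm].
exists a; first by rewrite mem_head.
move=> u; rewrite inE => /orP [/eqP ->//|/tm h]; exact: (le_trans h (ltW lt)).
Qed.
End SupInf.

Section Group.
Variables (R : realType) (d : nat) (G : seq 'M[R]_d).
Hypothesis HG : finite_orth_group G.

Lemma G1 : 1%:M \in G. Proof. by case: HG. Qed.
Lemma GM g h : g \in G -> h \in G -> g *m h \in G. Proof. by case: HG => _ H _ _; apply: H. Qed.
Lemma GT g : g \in G -> g^T \in G. Proof. by case: HG => _ _ H _; apply: H. Qed.
Lemma GTG g : g \in G -> g^T *m g = 1%:M. Proof. by case: HG => _ _ _ H; apply: H. Qed.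
Lemma GGT g : g \in G -> g *m g^T = 1%:M.
Proof. by move=> gG; have := GTG (GT gG); rewrite trmxK. Qed.
Lemma Gnil : G != [::]. Proof. by apply/eqP => e; have := G1; rewrite e. Qed.

Lemma dot_orth g (x y : 'cV[R]_d) : g \in G -> mf_dot (g *m x) (g *m y) = mf_dot x y.
Proof. by move=> gG; rewrite dot_mulmx mulmxA GTG // mul1mx. Qed.

Lemma enorm_orth g (x : 'cV[R]_d) : g \in G -> enorm (g *m x) = enorm x.
Proof. by move=> gG; rewrite /enorm dot_orth. Qed.

Lemma gorbit_refl x : gorbit G x x.
Proof. by exists 1%:M; rewrite ?mul1mx // G1. Qed.

Lemma dot_orbit g h (z x : 'cV[R]_d) : g \in G -> h \in G ->
  mf_dot (g *m z) (h *m x) = mf_dot ((h^T *m g) *m z) x.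
Proof. by move=> gG hG; rewrite dotC dot_mulmx dotC mulmxA. Qed.

Lemma opair_max (z x : 'cV[R]_d) : exists2 g0, g0 \in G &
  opair G z x = mf_dot (g0 *m z) x /\ forall g, g \in G -> mf_dot (g *m z) x <= mf_dot (g0 *m z) x.
Proof.
have [g0 g0G g0m] := seq_argmax (fun g => mf_dot (g *m z) x) Gnil.
exists g0 => //; split => //; apply: sup_max.
  by exists (g0 *m z), x; split => //; [exists g0 | apply: gorbit_refl].
move=> r [p [q [[g gG ->] [h hG ->] ->]]].
by rewrite dot_orbit //; apply: g0m; rewrite GM // GT.
Qed.

Lemma opair_ub (z x p q : 'cV[R]_d) : gorbit G z p -> gorbit G x q ->
  mf_dot p q <= opair G z x.
Proof.
move=> [g gG ->] [h hG ->]; have [g0 g0G [-> g0m]] := opair_max z x.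
by rewrite dot_orbit //; apply: g0m; rewrite GM // GT.
Qed.

Lemma enorm_orbit g h (x y : 'cV[R]_d) : g \in G -> h \in G ->
  enorm (g *m x - h *m y) = enorm ((h^T *m g) *m x - y).
Proof.
move=> gG hG; rewrite -(enorm_orth _ (GT hG)) mulmxBr !mulmxA GTG // mul1mx //.
Qed.

Lemma odist_min (x y : 'cV[R]_d) : exists2 k0, k0 \in G &
  odist G x y = enorm (k0 *m x - y).
Proof.
have [k0 k0G k0m] := seq_argmax (fun g => - enorm (g *m x - y)) Gnil.
exists k0 => //; apply: inf_min.
  by exists (k0 *m x), y; split => //; [exists k0 | apply: gorbit_refl].
move=> r [p [q [[g gG ->] [h hG ->] ->]]].
rewrite enorm_orbit //. rewrite -lerN2; apply: k0m; rewrite GM // GT //.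
Qed.

Lemma odist_lb (x y p q : 'cV[R]_d) : gorbit G x p -> gorbit G y q ->
  odist G x y <= enorm (p - q).
Proof.
move=> px qy; apply: ge_inf; last by exists p, q.
exists 0 => r [p' [q' [_ _ ->]]]; exact: enorm_ge0.
Qed.

Lemma opair_lip (z x x' : 'cV[R]_d) :
  opair G z x - opair G z x' <= enorm z * enorm (x - x').
Proof.
have [g0 g0G [-> _]] := opair_max z x.
have h1 : mf_dot (g0 *m z) x' <= opair G z x' by apply: opair_ub; [exists g0 | apply: gorbit_refl].
have h2 := CS (g0 *m z) (x - x'); rewrite enorm_orth // dotBr in h2.
lra.
Qed.

Lemma odist_lip (x y x' y' : 'cV[R]_d) :
  odist G x y - odist G x' y' <= enorm (x - x') + enorm (y - y').
Proof.
have [k kG ->] := odist_min x' y'.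
have h1 : odist G x y <= enorm (k *m x - y) by apply: odist_lb; [exists k | apply: gorbit_refl].
have e : k *m x - y = (k *m x' - y') + (k *m (x - x') + (y' - y)).
  rewrite mulmxBr; apply/matrixP => i j; rewrite !mxE; ring.
have h2 := enormD (k *m x' - y') (k *m (x - x') + (y' - y)).
have h3 := enormD (k *m (x - x')) (y' - y).
rewrite enorm_orth // in h3. rewrite (enormB y') in h3.
rewrite -e in h2. lra.
Qed.

End Group.


Section Rayleigh.
Variables (R : realType) (d : nat).

Definition Kb (A : 'M[R]_d) : R := \sum_j \sum_k `|A j k|.

Lemma Kb_ge0 A : 0 <= Kb A.
Proof. by apply: sumr_ge0 => j _; apply: sumr_ge0 => k _. Qed.

Lemma coord_le (u : 'cV[R]_d) j : u j 0 ^+ 2 <= mf_dot u u.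
Proof.
rewrite /mf_dot (bigD1 j) //= -expr2 lerDl.
by apply: sumr_ge0 => i _; rewrite -expr2 sqr_ge0.
Qed.

Lemma QB (A : 'M[R]_d) (u : 'cV[R]_d) : mf_dot u (A *m u) <= Kb A * mf_dot u u.
Proof.
rewrite /Kb mulr_suml /mf_dot; apply: ler_sum => j _.
rewrite mxE mulr_sumr mulr_suml; apply: ler_sum => k _.
have hj := coord_le u j; have hk := coord_le u k.
rewrite /mf_dot in hj hk.
set s := \sum_(i < d) u i 0 * u i 0 in hj hk *.
have h1 : u j 0 * (A j k * u k 0) <= `|A j k| * `|u j 0 * u k 0|.
  rewrite mulrCA -normrM; apply: le_trans (ler_norm _) _.
  by rewrite normrM.
apply: le_trans h1 _; apply: ler_wpM2l => //.
rewrite normrM.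
have : `|u j 0| ^+ 2 <= s by rewrite real_normK ?num_real.
have : `|u k 0| ^+ 2 <= s by rewrite real_normK ?num_real.
have := normr_ge0 (u j 0); have := normr_ge0 (u k 0).
nra.
Qed.


Lemma dot0l m (w : 'cV[R]_m) : mf_dot 0 w = 0.
Proof. by rewrite /mf_dot big1 // => i _; rewrite mxE mul0r. Qed.
Lemma dot0r m (w : 'cV[R]_m) : mf_dot w 0 = 0.
Proof. by rewrite dotC dot0l. Qed.

Lemma rayleigh (M : 'M[R]_d) : (0 < d)%N -> M^T = M ->
  (forall u, 0 <= mf_dot u (M *m u)) ->
  0 <= lambda_min M /\ forall u, lambda_min M * mf_dot u u <= mf_dot u (M *m u).
Proof.
move=> d0 sym psd.
pose Q := [set r | exists u : 'cV[R]_d, mf_dot u u = 1 /\ r = mf_dot u (M *m u)].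
pose c := inf Q.
have Qne : Q !=set0.
  pose e : 'cV[R]_d := delta_mx (Ordinal d0) 0.
  exists (mf_dot e (M *m e)), e; split => //.
  by rewrite dotE trmx_delta mul_delta_mx mxE !eqxx.
have Qlb : has_lbound Q by exists 0 => r [u [_ ->]]; apply: psd.
have c0 : 0 <= c by apply: lb_le_inf Qne _ => r [u [_ ->]]; apply: psd.
have key1 : forall u, c * mf_dot u u <= mf_dot u (M *m u).
  move=> u; have [->|un] := eqVneq u 0.
    by rewrite dot0l mulr0 mulmx0 dot0r.
  set s := enorm u.
  have sp : 0 < s.
    rewrite lt_def enorm_ge0 andbT; apply/eqP => /enorm_eq0 h; by rewrite h eqxx in un.
  have h : c <= s^-1 * (s^-1 * mf_dot u (M *m u)).
    apply: ge_inf => //; exists (s^-1 *: u); split.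
      by rewrite dotZl dotZr -enorm_sqr -/s; field; rewrite gt_eqF.
    by rewrite -scalemxAr dotZl dotZr.
  rewrite -enorm_sqr -/s.
  have e : s^-1 * (s^-1 * mf_dot u (M *m u)) * s ^+ 2 = mf_dot u (M *m u).
    by field; rewrite gt_eqF.
  rewrite -e; apply: ler_wpM2r => //; exact: sqr_ge0.
pose N := M - c%:M.
have qN : forall u, mf_dot u (N *m u) = mf_dot u (M *m u) - c * mf_dot u u.
  by move=> u; rewrite /N mulmxBl dotBr mul_scalar_mx dotZr.
have NT : N^T = N by rewrite /N linearB /= sym tr_scalar_mx.
have Nsym : forall u v, mf_dot u (N *m v) = mf_dot (N *m u) v.
  by move=> u v; rewrite dotC dot_mulmx NT dotC.
have det0 : \det N = 0.
  apply/eqP; apply: contraT => hdet; exfalso.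
  have Nu : N \in unitmx by rewrite unitmxE unitfE.
  pose B := invmx N.
  have BN : B *m N = 1%:M by apply: mulVmx.
  pose K' := Kb (B *m B^T); pose K1 := K' + 1; pose K2 := Kb N + 1.
  have K'0 : 0 <= K' by apply: Kb_ge0.
  have KN0 : 0 <= Kb N by apply: Kb_ge0.
  have K1p : 0 < K1 by rewrite /K1; lra.
  have K2p : 0 < K2 by rewrite /K2; lra.
  have step1 : forall w, mf_dot w w <= K1 * mf_dot (N *m w) (N *m w).
    move=> w.
    have ew : mf_dot w w = mf_dot (N *m w) (B^T *m w).
      by rewrite -dot_mulmx mulmxA BN mul1mx.
    have hb : mf_dot (B^T *m w) (B^T *m w) <= K' * mf_dot w w.
      by rewrite dot_mulmx trmxK mulmxA; apply: QB.
    have := dotxx_ge0 (N *m w - K1^-1 *: (B^T *m w)).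
    rewrite !dotBl !dotBr !dotZl !dotZr (dotC (B^T *m w)) -ew.
    set W := mf_dot w w; set A2 := mf_dot (N *m w) (N *m w);
    set B2 := mf_dot (B^T *m w) (B^T *m w) in hb *.
    move=> h.
    have W0 : 0 <= W by apply: dotxx_ge0.
    have h2 : 0 <= K1 * (A2 - K1^-1 * W - (K1^-1 * W - K1^-1 * (K1^-1 * B2))).
      by apply: mulr_ge0 => //; apply: ltW.
    have e : K1 * (A2 - K1^-1 * W - (K1^-1 * W - K1^-1 * (K1^-1 * B2))) =
       K1 * A2 - 2 * W + K1^-1 * B2 by field; rewrite gt_eqF.
    rewrite e in h2.
    have h3 : K1^-1 * B2 <= K1^-1 * (K' * W) by apply: ler_wpM2l => //; rewrite invr_ge0 ltW.
    have e2 : K1^-1 * (K' * W) = W - K1^-1 * W by rewrite /K1; field; rewrite /K1 in K1p; rewrite gt_eqF.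
    have h4 : 0 <= K1^-1 * W by apply: mulr_ge0 => //; rewrite invr_ge0 ltW.
    lra.
  have step2 : forall u, mf_dot (N *m u) (N *m u) <= K2 * mf_dot u (N *m u).
    move=> u; set v := N *m u.
    have q0 : forall w, 0 <= mf_dot w (N *m w) by move=> w; rewrite qN subr_ge0 key1.
    have := q0 (u - K2^-1 *: v).
    rewrite mulmxBr -scalemxAr !dotBl !dotBr !dotZl !dotZr.
    rewrite (Nsym u v) (dotC v (N *m u)) -/v.
    have hv : mf_dot v (N *m v) <= Kb N * mf_dot v v by apply: QB.
    set V := mf_dot v v in hv *; set q := mf_dot u (N *m u); set P := mf_dot v (N *m v) in hv *.
    move=> h.
    have V0 : 0 <= V by apply: dotxx_ge0.
    have h2 : 0 <= K2 * (q - K2^-1 * V - (K2^-1 * V - K2^-1 * (K2^-1 * P))).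
      by apply: mulr_ge0 => //; apply: ltW.
    have e : K2 * (q - K2^-1 * V - (K2^-1 * V - K2^-1 * (K2^-1 * P))) =
       K2 * q - 2 * V + K2^-1 * P by field; rewrite gt_eqF.
    rewrite e in h2.
    have h3 : K2^-1 * P <= K2^-1 * (Kb N * V) by apply: ler_wpM2l => //; rewrite invr_ge0 ltW.
    have e2 : K2^-1 * (Kb N * V) = V - K2^-1 * V by rewrite /K2; field; rewrite /K2 in K2p; rewrite gt_eqF.
    have h4 : 0 <= K2^-1 * V by apply: mulr_ge0 => //; rewrite invr_ge0 ltW.
    lra.
  have eta : c + (K1 * K2)^-1 <= c.
    apply: lb_le_inf Qne _ => r [u [u1 ->]].
    have s1 := step1 u; have s2 := step2 u.
    rewrite qN u1 mulr1 in s2; rewrite u1 in s1.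
    have hq : 1 <= K1 * (K2 * (mf_dot u (M *m u) - c)).
      apply: le_trans s1 _; apply: ler_wpM2l; [exact: ltW | exact: s2].
    have e : (K1 * K2)^-1 = (K1 * K2)^-1 * 1 by rewrite mulr1.
    have : (K1 * K2)^-1 * 1 <= (K1 * K2)^-1 * (K1 * (K2 * (mf_dot u (M *m u) - c))).
      by apply: ler_wpM2l => //; rewrite invr_ge0 ltW // mulr_gt0.
    have -> : (K1 * K2)^-1 * (K1 * (K2 * (mf_dot u (M *m u) - c))) = mf_dot u (M *m u) - c.
      by field; rewrite !gt_eqF.
    lra.
  have : 0 < (K1 * K2)^-1 by rewrite invr_gt0 mulr_gt0.
  lra.
have [v v0 hv] : exists2 v : 'rV[R]_d, v != 0 & v *m N = 0 by apply/det0P/eqP.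
have eigc : eigenvalue M c.
  apply/eigenvalueP; exists v => //.
  have -> : M = N + c%:M by rewrite /N subrK.
  by rewrite mulmxDr hv add0r mul_mx_scalar.
have lm : lambda_min M = c.
  apply: inf_min => // a /eigenvalueP [w hw w0].
  pose u := w^T.
  have Mu : M *m u = a *: u by rewrite -[M]sym -trmx_mul hw linearZ.
  have := key1 u; rewrite Mu dotZr.
  have up : 0 < mf_dot u u.
    rewrite lt_def dotxx_ge0 andbT; apply/eqP => /dotxx_eq0 h.
    by move: w0; rewrite -[w]trmxK -/u h trmx0 eqxx.
  by rewrite ler_pM2r.
by rewrite lm; split.
Qed.

End Rayleigh.


Section Perturb.
Variables (R : realType) (d : nat).

Definition ecurve (t : R) : 'cV[R]_d := \col_(j < d) t ^+ j.+1.

Definition pk (x k : 'cV[R]_d) : {poly R} :=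
  (mf_dot k x)%:P + \sum_(j < d) (k j 0) *: 'X^(j.+1).

Lemma pk_horner x k t : (pk x k).[t] = mf_dot k (x + ecurve t).
Proof.
rewrite /pk hornerD hornerC horner_sum dotDr; congr (_ + _).
by rewrite /mf_dot; apply: eq_bigr => j _; rewrite hornerZ hornerXn mxE.
Qed.

Lemma pk_neq0 x k : k != 0 -> pk x k != 0.
Proof.
move=> k0; have [j kj] : exists j, k j 0 != 0.
  apply/existsP; apply: contraR k0 => /existsPn h; apply/eqP/matrixP => i l.
  by rewrite (ord1 l) mxE; apply/eqP; move: (h i); rewrite negbK.
apply/negP => /eqP h; move/negP: kj; apply.
have := congr1 (fun p : {poly R} => p`_(j.+1)) h; rewrite /= coef0 /pk coefD coefC /=.
rewrite coef_sum add0r (bigD1 j) //= coefZ coefXn eqxx mulr1 big1 ?addr0 => [->//|].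
by move=> i ij; rewrite coefZ coefXn eqSS; case: eqP => [e|]; [by move: ij; rewrite (val_inj e) eqxx | by rewrite mulr0].
Qed.

Lemma ecurve_small t : 0 <= t <= 1 -> enorm (ecurve t) <= d%:R * t.
Proof.
move=> /andP [t0 t1]; apply: le_trans (enorm_le_sum _) _.
have -> : d%:R * t = \sum_(j < d) t by rewrite sumr_const card_ord mulr_natl.
apply: ler_sum => j _.
rewrite mxE ger0_norm ?exprn_ge0 //.
rewrite exprS; apply: ler_piMr => //; exact: exprn_ile1.
Qed.

Lemma perturb (a : seq 'cV[R]_d) (x : 'cV[R]_d) (del : R) : 0 < del ->
  (forall k, k \in a -> k != 0) ->
  exists x', enorm (x' - x) <= del /\ forall k, k \in a -> mf_dot k x' != 0.
Proof.
move=> dp a0.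
pose P := \prod_(k <- a) pk x k.
have P0 : P != 0.
  rewrite prodf_seq_neq0; apply/allP => k ka /=; exact: pk_neq0 (a0 k ka).
pose t0 := Num.min 1 (del / (d%:R + 1)).
have dd : 0 < d%:R + 1 :> R by rewrite ltr_wpDl.
have t0p : 0 < t0 by rewrite lt_min ltr01 divr_gt0.
pose rs := [seq t0 / (m.+1)%:R | m <- iota 0 (size P)].
have : ~~ all (root P) rs.
  apply/negP => hall.
  have uq : uniq rs.
    rewrite map_inj_uniq ?iota_uniq // => m1 m2 /eqP.
    rewrite -subr_eq0 -mulrBr mulf_eq0 gt_eqF //= subr_eq0 => /eqP/invr_inj/eqP.
    by rewrite eqr_nat eqSS => /eqP.
  have := max_poly_roots P0 hall uq; by rewrite size_map size_iota ltnn.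
move=> /allPn [t trs nroot].
have [tp tle] : 0 < t /\ t <= t0.
  move: trs => /mapP [m _ ->]; split; first by rewrite divr_gt0 // ltr0Sn.
  have h1 : (1:R) <= m.+1%:R by rewrite ler1n.
  have h2 : (0:R) < m.+1%:R by rewrite ltr0Sn.
  rewrite ler_pdivrMr //. nra.
exists (x + ecurve t); split.
  have -> : x + ecurve t - x = ecurve t by rewrite addrC addKr.
  apply: le_trans (ecurve_small _) _.
    by rewrite ltW //= (le_trans tle) // ge_min lexx.
  have : t <= del / (d%:R + 1) by rewrite (le_trans tle) // ge_min lexx orbT.
  rewrite ler_pdivlMr // => h.
  apply: le_trans h; rewrite mulrC; apply: ler_wpM2l; [exact: ltW | lra].
move=> k ka; rewrite -pk_horner.
move: nroot; rewrite /root /P horner_prod prodf_seq_neq0 => /allP /(_ k ka) //.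
Qed.

End Perturb.


Section Dense.
Variables (R : realType) (d n : nat) (G : seq 'M[R]_d) (z : 'I_n -> 'cV[R]_d).
Hypothesis HG : finite_orth_group G.

Definition bad_a1 : seq 'cV[R]_d := [seq (row j (g - 1%:M))^T | g <- G, j <- enum 'I_d].
Definition bad_a2 : seq 'cV[R]_d :=
  [seq gh.1 *m z i - gh.2 *m z i | i <- enum 'I_n, gh <- [seq (g, h) | g <- G, h <- G]].
Definition bad_a := [seq k <- bad_a1 ++ bad_a2 | k != 0].

Lemma dot_row (A : 'M[R]_d) j (u : 'cV[R]_d) : mf_dot (row j A)^T u = (A *m u) j 0.
Proof. by rewrite dotE trmxK -row_mul mxE. Qed.

Lemma good_O x' : (forall k, k \in bad_a -> mf_dot k x' != 0) -> Oset G z x'.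
Proof.
move=> good; split.
  move=> g gG gx; apply/eqP; apply: contraT => g1.
  have [j hj] : exists j, row j (g - 1%:M) != 0.
    apply/existsP; apply: contraR g1 => /existsPn h.
    have : g - 1%:M = 0 by apply/row_matrixP => j; rewrite row0; apply/eqP; move: (h j); rewrite negbK.
    by move/eqP; rewrite subr_eq0.
  have := good (row j (g - 1%:M))^T.
  rewrite dot_row mulmxBl mul1mx gx subrr mxE eqxx; apply.
  rewrite mem_filter; apply/andP; split; first by rewrite -trmx0 (inj_eq (@trmx_inj _ _ _)).
  by rewrite mem_cat; apply/orP; left; apply: allpairs_f => //; rewrite mem_enum.
move=> i.
have [g0 g0G g0m] := seq_argmax (fun g => mf_dot (g *m z i) x') (Gnil HG).
exists (g0 *m z i); first by exists g0.
move=> p [h hG ->] pn.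
rewrite mulmxA; rewrite mulmxA in pn.
rewrite lt_def; apply/andP; split; last by apply: g0m; rewrite GM.
have := good (g0 *m z i - (h *m g0) *m z i).
rewrite dotBl subr_eq0 eq_sym; apply.
rewrite mem_filter; apply/andP; split; first by rewrite subr_eq0 eq_sym.
rewrite mem_cat; apply/orP; right.
apply/allpairsP; exists (i, (g0, h *m g0)); split => //=; first by rewrite mem_enum.
by apply/allpairsP; exists (g0, h *m g0); split => //=; rewrite GM.
Qed.

Lemma O_dense x del : 0 < del -> exists2 x', Oset G z x' & enorm (x' - x) <= del.
Proof.
move=> dp.
have nz : forall k, k \in bad_a -> k != 0 by move=> k; rewrite mem_filter => /andP [].
have [x' [h1 h2]] := @perturb _ _ bad_a x del dp nz.
by exists x' => //; apply: good_O.
Qed.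

End Dense.


Section Core.
Variables (R : realType) (d n : nat) (G : seq 'M[R]_d) (z : 'I_n -> 'cV[R]_d).
Hypothesis HG : finite_orth_group G.
Hypothesis d0 : (0 < d)%N.

Lemma vsel_argmax z0 x : argmax_orbit G z0 x (vsel G z0 x).
Proof.
apply: xgetPex; have [g0 g0G [_ g0m]] := opair_max HG z0 x.
exists (g0 *m z0); split; first by exists g0.
by move=> q [g gG ->]; exact: g0m.
Qed.

Lemma opair_vsel z0 x : opair G z0 x = mf_dot (vsel G z0 x) x.
Proof.
have [[g1 g1G e] m] := vsel_argmax z0 x.
have [g0 g0G [-> g0m]] := opair_max HG z0 x.
apply/le_anti/andP; split; first by apply: m; exists g0.
by rewrite e; exact: g0m.
Qed.

Lemma opair_f z0 x y w : argmax_orbit G y (vsel G z0 x) w ->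
  opair G z0 y = mf_dot (vsel G z0 x) w.
Proof.
move=> [wy wm]; set v := vsel G z0 x.
have [[g1 g1G ev] _] := vsel_argmax z0 x.
apply/le_anti/andP; split; last by apply: (opair_ub HG) => //; exists g1.
have [g0 g0G [-> _]] := opair_max HG z0 y.
have e : g0 *m z0 = (g0 *m g1^T) *m v.
  by rewrite /v ev mulmxA -(mulmxA g0) (GTG HG) // mulmx1.
rewrite e dot_mulmx (dotC v ((g0 *m g1^T)^T *m y)) (dotC v w); apply: wm.
by exists ((g0 *m g1^T)^T) => //; rewrite (GT HG) // (GM HG) // (GT HG).
Qed.

Lemma dot_sum (u : 'cV[R]_d) (I : Type) (r : seq I) (P : pred I) (F : I -> 'cV[R]_d) :
  mf_dot u (\sum_(i <- r | P i) F i) = \sum_(i <- r | P i) mf_dot u (F i).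
Proof.
apply: (big_morph (mf_dot u)); last exact: dot0r.
by move=> a b; exact: dotDr.
Qed.

Lemma core x y f : Fset G z x y f ->
  fvalue G z x y f * odist G x y <= enorm (maxfilter G z x - maxfilter G z y).
Proof.
move=> Ff.
pose v := fun i => vsel G (z i) x.
pose S := Sset G x y.
have Sfin : finite_set S.
  apply: (@sub_finite_set _ _ ((fun g => g *m y) @` [set` G])).
    by move=> w [[g gG ->] _]; exists g.
  by apply: finite_image; apply: finite_seq.
pose s := fset_set S.
have fs : forall i, f i \in s by move=> i; rewrite in_fset_set //; apply: mem_set; case: (Ff i).
have sS : forall w, w \in s -> S w by move=> w; rewrite in_fset_set // => /set_mem.
have diffE : forall i, (maxfilter G z x - maxfilter G z y) i 0 = mf_dot (v i) (x - f i).
  move=> i; rewrite !mxE opair_vsel (@opair_f (z i) x y (f i)) ?dotBr //.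
  by case: (Ff i).
set E := enorm _.
have E2 : E ^+ 2 = \sum_i (mf_dot (v i) (x - f i)) ^+ 2.
  rewrite /E enorm_sqr /mf_dot; apply: eq_bigr => i _; by rewrite diffE expr2.
pose lam := fun w => lambda_min (\sum_(i < n | f i == w) v i *m (v i)^T).
have fvE : fvalue G z x y f = Num.sqrt (\sum_(w <- s) lam w).
  by rewrite /fvalue fsbig_finite.
have lamP : forall w, 0 <= lam w /\
    forall u, lam w * mf_dot u u <= \sum_(i < n | f i == w) (mf_dot (v i) u) ^+ 2.
  move=> w.
  have qf : forall u, mf_dot u ((\sum_(i < n | f i == w) v i *m (v i)^T) *m u) =
                      \sum_(i < n | f i == w) (mf_dot (v i) u) ^+ 2.
    move=> u; rewrite mulmx_suml dot_sum; apply: eq_bigr => i _.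
    rewrite -mulmxA [(v i)^T *m u]mx11_scalar mul_mx_scalar dotZr -dotE.
    by rewrite (dotC u) expr2.
  have := @rayleigh R d (\sum_(i < n | f i == w) v i *m (v i)^T) d0 _ _.
  case.
  - by rewrite linear_sum; apply: eq_bigr => i _; rewrite /= trmx_mul trmxK.
  - by move=> u; rewrite qf; apply: sumr_ge0 => i _; exact: sqr_ge0.
  move=> h1 h2; split => // u; rewrite -qf; exact: h2.
have L0 : 0 <= \sum_(w <- s) lam w by apply: sumr_ge0 => w _; case: (lamP w).
set D := odist G x y.
have D0 : 0 <= D by rewrite /D; have [k _ ->] := odist_min HG x y; exact: enorm_ge0.
have key : (\sum_(w <- s) lam w) * D ^+ 2 <= E ^+ 2.
  rewrite mulr_suml E2.
  have -> : \sum_i (mf_dot (v i) (x - f i)) ^+ 2 =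
            \sum_(w <- s) \sum_(i < n | f i == w) (mf_dot (v i) (x - w)) ^+ 2.
    apply: esym; under eq_bigr do rewrite big_mkcond.
    rewrite exchange_big /=; apply: eq_bigr => i _.
    rewrite -big_mkcond /=.
    rewrite (eq_bigl (fun w => w == f i)); last by move=> w; rewrite eq_sym.
    by rewrite (fbig_pred1_inj (k := id)).
  rewrite big_seq [X in _ <= X]big_seq; apply: ler_sum => w ws.
  have [l0 lm] := lamP w.
  have [wy _] := sS w ws.
  have hD : D ^+ 2 <= mf_dot (x - w) (x - w).
    have h := odist_lb (gorbit_refl HG x) wy.
    rewrite -enorm_sqr; have := D0; nra.
  apply: le_trans (ler_wpM2l l0 hD) _; exact: lm.
rewrite fvE.
have E0 : 0 <= E by apply: enorm_ge0.
rewrite -(ger0_norm D0) -sqrtr_sqr -sqrtrM // -(ger0_norm E0) -sqrtr_sqr ler_sqrt //.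
exact: sqr_ge0.
Qed.

End Core.


Section Final.
Variables (R : realType) (d n : nat) (G : seq 'M[R]_d) (z : 'I_n -> 'cV[R]_d).
Hypothesis HG : finite_orth_group G.

Lemma sup_ge0 (S : set R) : (forall s, S s -> 0 <= s) -> 0 <= sup S.
Proof.
move=> h; have [hs|hs] := pselect (has_sup S).
  case: (hs) => [[e Se] _]; apply: le_trans (h e Se) _; exact: sup_upper_bound.
by rewrite sup_out.
Qed.

Definition rval x y := sup [set s | exists2 f, Fset G z x y f & s = fvalue G z x y f].

Lemma rval_ge0 x y : 0 <= rval x y.
Proof. by apply: sup_ge0 => s [f _ ->]; exact: sqrtr_ge0. Qed.

Lemma rval_bound x y : (0 < d)%N ->
  rval x y * odist G x y <= enorm (maxfilter G z x - maxfilter G z y).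
Proof.
move=> d0; set D := odist G x y; set E := enorm _.
have D0 : 0 <= D by rewrite /D; have [k _ ->] := odist_min HG x y; exact: enorm_ge0.
have [De|Dp] := eqVneq D 0.
  by rewrite De mulr0 enorm_ge0.
have Dpos : 0 < D by rewrite lt_def Dp D0.
rewrite -ler_pdivlMr // /rval.
have [[s Ss]|nS] := pselect (exists s, [set s | exists2 f, Fset G z x y f & s = fvalue G z x y f] s).
  apply: ge_sup; first by exists s.
  move=> r [f Ff ->]; rewrite ler_pdivlMr //; exact: core.
have -> : [set s | exists2 f, Fset G z x y f & s = fvalue G z x y f] = set0.
  by rewrite -subset0 => s' Ss'; exfalso; apply: nS; exists s'.
by rewrite sup0 divr_ge0 // enorm_ge0.
Qed.

Lemma phi_lip x x' : enorm (maxfilter G z x' - maxfilter G z x) <=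
  (\sum_i enorm (z i)) * enorm (x' - x).
Proof.
apply: le_trans (enorm_le_sum _) _; rewrite mulr_suml; apply: ler_sum => i _.
rewrite !mxE ler_norml; apply/andP; split.
  rewrite lerNl opprB (enormB x'); exact: opair_lip.
exact: opair_lip.
Qed.

End Final.

Unset Implicit Arguments.
Set Strict Implicit.

Theorem theorem26 (R : realType) (d n : nat) (G : seq 'M[R]_d)
    (z : 'I_n -> 'cV[R]_d) :
  finite_orth_group G ->
  forall x y : 'cV[R]_d, gorbit G x <> gorbit G y ->
    mf_alpha G z <= enorm (maxfilter G z x - maxfilter G z y) / odist G x y.
Proof.
move=> HG x y hxy.
have [d0|dpos] := posnP d.
  exfalso; apply: hxy.
  have -> : x = y by apply/matrixP => i j; exfalso; have := ltn_ord i; rewrite {2}d0.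
  by [].
set D := odist G x y; set E := enorm _.
have Dp : 0 < D.
  rewrite /D; have [k kG e] := odist_min HG x y; rewrite e lt_def enorm_ge0 andbT.
  apply/eqP => h0.
  have kx : k *m x = y by apply/eqP; rewrite -subr_eq0; apply/eqP; exact: enorm_eq0.
  apply: hxy; apply/seteqP; split => p [g gG ->].
    exists (g *m k^T); first by rewrite (GM HG) // (GT HG).
    by rewrite -kx mulmxA -(mulmxA g) (GTG HG) // mulmx1.
  by exists (g *m k); [rewrite (GM HG) | rewrite -kx mulmxA].
have E0 : 0 <= E by apply: enorm_ge0.
rewrite ler_pdivlMr //.
set a := mf_alpha G z.
have [a0|apos] := lerP a 0.
  by apply: le_trans E0; rewrite mulr_le0_ge0 // ltW.
rewrite leNgt; apply/negP => hlt.
set gap := a * D - E.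
have gp : 0 < gap by rewrite /gap subr_gt0.
set C := \sum_i enorm (z i).
have C0 : 0 <= C by apply: sumr_ge0 => i _; exact: enorm_ge0.
have den : 0 < 2 * C + 2 * a + 1 by lra.
set del := gap / (2 * C + 2 * a + 1).
have delp : 0 < del by rewrite divr_gt0.
have hdel : (2 * C + 2 * a + 1) * del = gap by rewrite /del; field; rewrite gt_eqF.
have [x' Ox' hx'] := @O_dense _ _ _ G z HG x del delp.
have [y' Oy' hy'] := @O_dense _ _ _ G z HG y del delp.
have ar : a <= rval G z x' y'.
  apply: ge_inf.
    by exists 0 => r [x1 [y1 [_ _ ->]]]; exact: rval_ge0.
  by exists x', y'; split.
set D' := odist G x' y'.
set E' := enorm (maxfilter G z x' - maxfilter G z y').
have D'0 : 0 <= D' by rewrite /D'; have [k _ ->] := odist_min HG x' y'; exact: enorm_ge0.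
have rb : rval G z x' y' * D' <= E' by apply: rval_bound.
have h1 : a * D' <= E' by apply: le_trans rb; apply: ler_wpM2r.
have hDD : D - D' <= enorm (x - x') + enorm (y - y') by apply: odist_lip.
rewrite (enormB x) (enormB y) in hDD.
have h2 : a * (D - D') <= a * (2 * del) by apply: ler_wpM2l; [exact: ltW | lra].
have hE : E' <= E + C * enorm (x' - x) + C * enorm (y' - y).
  have e : maxfilter G z x' - maxfilter G z y' =
     (maxfilter G z x - maxfilter G z y) + (maxfilter G z x' - maxfilter G z x)
     - (maxfilter G z y' - maxfilter G z y).
    apply/matrixP => i j; rewrite !mxE; ring.
  rewrite /E' e.
  have t1 := enormD (maxfilter G z x - maxfilter G z y + (maxfilter G z x' - maxfilter G z x))
                 (- (maxfilter G z y' - maxfilter G z y)).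
  have t2 := enormD (maxfilter G z x - maxfilter G z y) (maxfilter G z x' - maxfilter G z x).
  rewrite enormN in t1.
  have p1 := phi_lip z HG x x'; have p2 := phi_lip z HG y y'.
  rewrite -/C in p1 p2. rewrite -/E in t2. lra.
have h3 : C * enorm (x' - x) <= C * del by apply: ler_wpM2l.
have h4 : C * enorm (y' - y) <= C * del by apply: ler_wpM2l.
have : gap <= (2 * C + 2 * a) * del.
  rewrite /gap. 
  have e1 : a * (D - D') = a * D - a * D' by ring.
  have e2 : a * (2 * del) = 2 * (a * del) by ring.
  have e3 : (2 * C + 2 * a) * del = 2 * (C * del) + 2 * (a * del) by ring.
  rewrite e1 e2 in h2; rewrite e3. lra.
have e4 : (2 * C + 2 * a) * del = gap - del.
  by rewrite -hdel; ring.
rewrite e4. lra.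
Qed.
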